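(* As $p\to0$, $U(p)=\dfrac{p}{(\log 2)^2}+\Theta(p^2)$, where $U(p):=\min_{r\in[2,\infty)}\dfrac{1}{r\,|\log(1-(1-p)^{r-1})|}$.
   Context: $\log$ is the natural logarithm; $p\in(0,1)$. *)

(* Defs.v *)
From HB Require Import structures.
From mathcomp Require Import all_boot all_order all_algebra.
From mathcomp Require Import all_classical all_reals all_analysis.
Set Implicit Arguments. Unset Strict Implicit. Unset Printing Implicit Defensive.
Import Order.TTheory GRing.Theory Num.Theory.
Local Open Scope classical_set_scope.
Local Open Scope ring_scope.

Definition Ug (R : realType) (p r : R) : R :=
  1 / (r * `| ln (1 - (1 - p) `^ (r - 1)) |).

(* U(p) := min_{r in [2,oo)} Ug p r, rendered as the infimum (equal to the
   minimum whenever the minimum exists). *)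
Definition U (R : realType) (p : R) : R :=
  inf [set Ug p r | r in [set r : R | 2 <= r]].

(* Main.v *)
Require Import Defs.
From HB Require Import structures.
From mathcomp Require Import all_boot all_order all_algebra.
From mathcomp Require Import all_classical all_reals all_analysis.
From mathcomp Require Import ring lra.
Import Order.TTheory GRing.Theory Num.Theory numFieldNormedType.Exports.
Local Open Scope ring_scope.

Section S.
Variable R : realType.
Lemma rho (s1 s2 : R) : 0 < s1 -> s1 <= s2 -> s2 < 1 ->
  ln s1 * (1 - s2) <= ln s2 * (1 - s1).
Proof.
move=> s10 s12 s21.
set t := (1 - s2) / (1 - s1).
have h1 : 0 < 1 - s1 by lra.
have t0 : 0 <= t by rewrite divr_ge0 //; lra.
have t1 : t <= 1 by rewrite ler_pdivrMr // mul1r; lra.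
have H : Itv.spec (@Itv.num_sem R) (Itv.Real `[0%Z, 1%Z]) t.
  by rewrite /Itv.spec /Itv.num_sem /= num_real in_itv /= t0 t1.
have := @concave_ln R (Itv.mk H) s1 1 s10 ltr01.
rewrite !convRE /= ln1 mulr0 addr0 mulr1.
have -> : t * s1 + unstable.onem t = s2.
  rewrite /unstable.onem /t; field; lra.
move=> h.
have := ler_wpM2r (ltW h1) h.
have -> : t * ln s1 * (1 - s1) = ln s1 * (1 - s2).
  rewrite /t; field; lra.
by rewrite mulrC.
Qed.
Definition kf (z : R) := ln z * ln (1 - z).
Lemma kf_der (z : R) : 0 < z < 1 ->
  is_derive z 1 kf (ln z * ((1 - z)^-1 * (0 - 1)) + ln (1 - z) * z^-1).
Proof.
case/andP=> z0 z1.
have d1 : is_derive z 1 (@ln R) z^-1 := is_derive1_ln z0.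
have di : is_derive z (1:R) (cst (1:R) - id) (0 - 1).
  apply: is_deriveB.
have d2 : is_derive z 1 ((@ln R) \o (cst (1:R) - id)) ((1 - z)^-1 * (0 - 1)).
  apply: is_derive1_comp di.
  apply: is_derive1_ln. rewrite /= subr_gt0 //.
have := is_deriveM d1 d2.
by [].
Qed.


Lemma K1 (x : R) : 0 < x -> x <= 1/2 -> kf x <= kf (1/2).
Proof.
move=> x0 xh.
apply: (@ger0_derive1_ndecr R kf x (1/2)) => //.
- move=> z; rewrite in_itv /= => /andP[xz zh].
  have hz : 0 < z < 1 by apply/andP; split; lra.
  have [] := kf_der _ hz.
  by [].
- move=> z; rewrite in_itv /= => /andP[xz zh].
  have hz : 0 < z < 1 by apply/andP; split; lra.
  have kd := kf_der _ hz. rewrite derive1E derive_val.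
  have hr := @rho z (1-z) ltac:(lra) ltac:(lra) ltac:(lra).
  have z0 : 0 < z by lra.
  have z1 : 0 < 1 - z by lra.
  set a := ln z in hr *; set b := ln (1 - z) in hr *.
  have -> : a * ((1 - z)^-1 * (0 - 1)) + b * z^-1 = (b * (1 - z) - a * z) / (z * (1 - z)).
    field; apply/andP; split; lra.
  apply: divr_ge0; last by apply: mulr_ge0; lra.
  lra.
- have H := @continuous_in_subspaceT _ _ [set` `[x, 1/2]] kf.
  apply: H => z.
  rewrite inE /= in_itv /= => /andP[xz zh].
  have hz : 0 < z < 1 by apply/andP; split; lra.
  have [dz _] := kf_der _ hz.
  exact/differentiable_continuous/derivable1_diffP.
Qed.
End S.

Lemma ln_le_sub1 (R : realType) (u : R) : 0 < u -> ln u <= u - 1.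
Proof.
move=> u0; have h := @le_ln1Dx R (u - 1) ltac:(lra).
have e : 1 + (u - 1) = u by ring.
by rewrite e in h.
Qed.

Lemma ln2_bounds (R : realType) : 1/2 <= ln (2:R) <= 5/6.
Proof.
have l2 : ln ((2:R)^-1) = - ln 2 by rewrite lnV // posrE.
apply/andP; split.
  have h := @ln_le_sub1 R (2^-1) ltac:(lra).
  rewrite l2 in h; lra.
have e : (2:R) = (1 + 3^-1) * (1 + 2^-1) by field.
rewrite e lnM ?posrE; [|lra|lra].
have h1 := @le_ln1Dx R (3^-1) ltac:(lra).
have h2 := @le_ln1Dx R (2^-1) ltac:(lra).
lra.
Qed.

Lemma alg_lower (R : realType) (p L c D : R) : 0 < p -> p <= L -> 2 * p <= c ^+ 2 ->
  0 < D -> D * L <= c ^+ 2 + 2 * L ->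
  p / c ^+ 2 - 2 / c ^+ 4 * p ^+ 2 <= 1 / D.
Proof.
move=> p0 pL pc D0 DL.
set k := c ^+ 2 in pc DL *.
have k0 : 0 < k by lra.
have L0 : 0 < L by lra.
have -> : 2 / c ^+ 4 = 2 / k ^+ 2 by rewrite /k -exprM.
have -> : p / k - 2 / k ^+ 2 * p ^+ 2 = (p * k - 2 * p ^+ 2) / k ^+ 2.
  by field; lra.
rewrite ler_pdivrMr; last by apply: exprn_gt0.
rewrite mul1r [D^-1 * _]mulrC ler_pdivlMr //.
have a0 : 0 <= p * k - 2 * p ^+ 2 by nra.
have h1 : (p * k - 2 * p ^+ 2) * (D * L) <= (p * k - 2 * p ^+ 2) * (k + 2 * L).
  by apply: ler_wpM2l.
have h2 : (p * k - 2 * p ^+ 2) * (k + 2 * L) <= k ^+ 2 * L.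
  have q1 : 0 <= (L - p) * k * (k - 2 * p).
    by apply: mulr_ge0; [apply: mulr_ge0|]; lra.
  have q2 : 0 <= p ^+ 2 * L by apply: mulr_ge0; [apply: sqr_ge0|lra].
  have e : k ^+ 2 * L - (p * k - 2 * p ^+ 2) * (k + 2 * L) = (L - p) * k * (k - 2 * p) + 4 * (p ^+ 2 * L) by ring.
  lra.
have h3 : ((p * k - 2 * p ^+ 2) * D) * L <= k ^+ 2 * L by rewrite -mulrA; lra.
by rewrite ler_pM2r in h3.
Qed.

Lemma alg_upper (R : realType) (p L c : R) : 0 < p -> p <= 1/10 -> p <= L ->
  L * (1 - p) <= p -> 1/2 <= c -> c <= 5/6 ->
  L / (c * (L + c)) - p / c ^+ 2 <= - (1/27) * p ^+ 2.
Proof.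
move=> p0 p10 pL Lp c1 c2.
have Dn0 : 0 < c ^+ 2 * (L + c) by apply: mulr_gt0; [apply: exprn_gt0|]; lra.
have -> : L / (c * (L + c)) - p / c ^+ 2 = (L * c - p * (L + c)) / (c ^+ 2 * (L + c)).
  by field; apply/andP; split; lra.
rewrite ler_pdivrMr //.
set e := L - p.
have e0 : 0 <= e by rewrite /e; lra.
have epL : e <= p * L by rewrite /e; lra.
have L109 : L <= 10/9 * p.
  have : L * (1 - p) >= L * (9/10) by apply: ler_wpM2l; lra.
  lra.
have ep : e <= p * (10/9 * p) by apply: (le_trans epL); apply: ler_wpM2l; lra.
have ec : e * c <= e * (5/6) by apply: ler_wpM2l.
have pLp : p * p <= p * L by apply: ler_wpM2l; lra.
have N : L * c - p * (L + c) = e * c - p * L by rewrite /e; ring.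
have c2b : c ^+ 2 <= 1.
  have : c * c <= c * 1 by apply: ler_wpM2l; lra.
  rewrite expr2 mulr1 => h; apply: (le_trans h); lra.
have Dn2 : c ^+ 2 * (L + c) <= 2.
  have : c ^+ 2 * (L + c) <= 1 * (L + c) by apply: ler_wpM2r; lra.
  lra.
have X : (1/27) * p ^+ 2 * (c ^+ 2 * (L + c)) <= (1/27) * p ^+ 2 * 2.
  by apply: ler_wpM2l; [apply: mulr_ge0; [lra|apply: sqr_ge0]|exact: Dn2].
rewrite N.
have e2 : p * (10/9 * p) = 10/9 * p ^+ 2 by rewrite expr2; ring.
have e3 : p * p = p ^+ 2 by rewrite expr2.
have e4 : - (1/27) * p ^+ 2 * (c ^+ 2 * (L + c)) = - ((1/27) * p ^+ 2 * (c ^+ 2 * (L + c))) by ring.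
have e5 : (1/27) * p ^+ 2 * 2 = 2/27 * p ^+ 2 by ring.
rewrite e2 in ep; rewrite e3 in pLp; rewrite e5 in X; rewrite e4.
lra.
Qed.

Lemma ln_half (R : realType) : ln (1/2 : R) = - ln 2.
Proof. by rewrite div1r lnV // posrE. Qed.

Lemma Kmax (R : realType) (x : R) : 0 < x < 1 -> ln x * ln (1 - x) <= ln 2 ^+ 2.
Proof.
case/andP=> x0 x1.
have kh : @kf R (1/2) = ln (2:R) ^+ 2.
  rewrite /kf (_ : 1 - 1/2 = 1/2 :> R); last by field.
  by rewrite ln_half mulrNN expr2.
have [xh|xh] := lerP x (1/2).
  by have := @K1 R x x0 xh; rewrite kh.
have := @K1 R (1 - x) ltac:(lra) ltac:(lra).
by rewrite kh /kf (_ : 1 - (1 - x) = x); [rewrite mulrC | ring].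
Qed.

Lemma fbound (R : realType) (p r : R) : 0 < p -> p < 1 -> 2 <= r ->
  0 < - ln (1 - (1 - p) `^ (r - 1)) /\
  r * (- ln (1 - (1 - p) `^ (r - 1))) * (- ln (1 - p)) <= ln 2 ^+ 2 + 2 * (- ln (1 - p)).
Proof.
move=> p0 p1 r2.
set q := 1 - p.
have q0 : 0 < q by rewrite /q; lra.
have q1 : q < 1 by rewrite /q; lra.
have lnq : ln q < 0 by apply: ln_lt0; rewrite q0 q1.
set L := - ln q.
have L0 : 0 < L by rewrite /L; lra.
have pL : p <= L.
  have := @le_ln1Dx R (- p) ltac:(lra); rewrite /L /q; lra.
have -> : q `^ (r - 1) = expR ((r - 1) * ln q).
  by rewrite /powR (negbTE (lt0r_neq0 q0)).
set y := expR ((r - 1) * ln q).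
have y0 : 0 < y by apply: expR_gt0.
have y1 : y < 1.
  rewrite /y expR_lt1 pmulr_rlt0 //; lra.
set x := expR (r * ln q).
have xe : x = q * y.
  rewrite /x /y (_ : r * ln q = ln q + (r - 1) * ln q); last by ring.
  by rewrite expRD lnK // posrE.
have x0 : 0 < x by apply: expR_gt0.
have x1 : x < 1 by rewrite xe; nra.
have hK := @Kmax R x ltac:(lra).
rewrite /x expRK -/x in hK.
set B := - ln (1 - y).
set B' := - ln (1 - x).
have B0 : 0 < B.
  have : ln (1 - y) < 0 by apply: ln_lt0; apply/andP; split; lra.
  rewrite /B; lra.
split => //.
have h1 : r * L * B' <= ln 2 ^+ 2.
  have -> : r * L * B' = r * ln q * ln (1 - x) by rewrite /L /B'; ring.
  exact: hK.
have h2 : (1 - y) * (B - B') <= p * y.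
  have u0 : 0 < (1 - x) / (1 - y) by apply: divr_gt0; lra.
  have hl := @ln_le_sub1 R _ u0.
  rewrite ln_div ?posrE in hl; [|lra|lra].
  have -> : B - B' = ln (1 - x) - ln (1 - y) by rewrite /B /B'; ring.
  have e : (1 - x) / (1 - y) - 1 = (p * y) / (1 - y).
    by rewrite xe /q; field; lra.
  rewrite e in hl.
  have := ler_wpM2l (x := 1 - y) ltac:(lra) hl.
  have e' : (1 - y) * ((p * y) / (1 - y)) = p * y by field; lra.
  rewrite e'; lra.
have h3 : y * (1 + (r - 1) * L) <= 1.
  have e1 : y * expR (- ((r - 1) * ln q)) = 1 by rewrite /y -expRD subrr expR0.
  have e2 := @expR_ge1Dx R (- ((r - 1) * ln q)).
  have e3 : - ((r - 1) * ln q) = (r - 1) * L by rewrite /L; ring.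
  rewrite e3 in e1 e2.
  rewrite -[X in _ <= X]e1; apply: ler_wpM2l => //; lra.
have h4 : r * p * y <= 2 * (1 - y).
  have a1 : r * p <= 2 * ((r - 1) * L).
    have : r * p <= r * L by apply: ler_wpM2l; lra.
    have : r * L <= 2 * (r - 1) * L by apply: ler_wpM2r; lra.
    rewrite -mulrA; lra.
  have := ler_wpM2r (ltW y0) a1; lra.
have h5 : (1 - y) * (r * L * (B - B')) <= (1 - y) * (2 * L).
  have := ler_wpM2l (x := r * L) ltac:(nra) h2.
  have := ler_wpM2r (ltW L0) h4.
  move=> a b.
  have e1 : (1 - y) * (r * L * (B - B')) = r * L * ((1 - y) * (B - B')) by ring.
  have e2 : r * L * (p * y) = r * p * y * L by ring.
  have e3 : (1 - y) * (2 * L) = 2 * (1 - y) * L by ring.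
  rewrite e1 e3; rewrite e2 in b; lra.
rewrite ler_pM2l in h5; last lra.
have e : r * B * L = r * L * B' + r * L * (B - B') by ring.
rewrite e; lra.
Qed.

Lemma Ug_r0 (R : realType) (p : R) : 0 < p -> p < 1 ->
  Ug p (1 + ln 2 / (- ln (1 - p))) =
  (- ln (1 - p)) / (ln 2 * ((- ln (1 - p)) + ln 2)).
Proof.
move=> p0 p1.
have q0 : 0 < 1 - p by lra.
have lnq : ln (1 - p) < 0 by apply: ln_lt0; apply/andP; split; lra.
have c0 : 0 < ln (2:R) by apply: ln_gt0; lra.
rewrite /Ug (_ : 1 + ln 2 / - ln (1 - p) - 1 = ln 2 / - ln (1 - p)); last by ring.
rewrite /powR (negbTE (lt0r_neq0 q0)).
rewrite (_ : ln 2 / - ln (1 - p) * ln (1 - p) = - ln 2); last by field; lra.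
rewrite expRN lnK ?posrE //.
rewrite (_ : 1 - 2^-1 = 1 / 2 :> R); last by field.
rewrite ln_half normrN gtr0_norm //.
field; apply/and3P; split; lra.
Qed.

Theorem claim1 (R : realType) :
  exists c1 c2 delta : R, [/\ 0 < c1, 0 < c2, 0 < delta &
    forall p : R, 0 < p -> p < 1 -> p < delta ->
      c1 * p ^+ 2 <= `| U p - p / (ln (2 : R)) ^+ 2 | <= c2 * p ^+ 2].
Proof.
have /andP[cl cu] := @ln2_bounds R.
set c := ln (2:R) in cl cu *.
have c0 : 0 < c by lra.
exists (1/27), (2 / c ^+ 4), (1/10); split; [lra| |lra|].
  by apply: divr_gt0; [lra|apply: exprn_gt0].
move=> p p0 p1 pd.
set L := - ln (1 - p).
have pL : p <= L.
  have := @le_ln1Dx R (- p) ltac:(lra); rewrite /L; lra.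
have Lp : L * (1 - p) <= p.
  have h := @le_ln1Dx R (p / (1 - p)) ltac:(apply: lt_le_trans (divr_ge0 _ _); lra).
  have e : 1 + p / (1 - p) = (1 - p)^-1 by field; lra.
  rewrite e lnV ?posrE in h; last lra.
  have := ler_wpM2r (x := 1 - p) ltac:(lra) h.
  have e' : p / (1 - p) * (1 - p) = p by field; lra.
  by rewrite e' /L.
have L109 : L <= 10/9 * p.
  have : L * (1 - p) >= L * (9/10) by apply: ler_wpM2l; lra.
  lra.
set S := ([set Ug p r | r in [set r : R | 2 <= r]])%classic.
have lbS : lbound S (p / c ^+ 2 - 2 / c ^+ 4 * p ^+ 2).
  move=> s [r /= r2 <-].
  have [B0 hb] := @fbound R p r p0 p1 r2.
  rewrite /Ug ltr0_norm; last lra.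
  rewrite -/L in hb *.
  apply: (@alg_lower R p L c) => //.
  - have : c * c >= 1/2 * (1/2) by apply: ler_pM; lra.
    rewrite expr2; lra.
  - apply: mulr_gt0 => //; lra.
have hasl : has_lbound S by exists (p / c ^+ 2 - 2 / c ^+ 4 * p ^+ 2).
have r0S : S (Ug p (1 + c / L)).
  exists (1 + c / L) => //=.
  have : 1 <= c / L by rewrite ler_pdivlMr; lra.
  lra.
have up := ge_inf hasl r0S.
rewrite /c /L Ug_r0 // -/c -/L in up.
have low : p / c ^+ 2 - 2 / c ^+ 4 * p ^+ 2 <= inf S.
  by apply: lb_le_inf => //; exists (Ug p (1 + c / L)).
have au := @alg_upper R p L c p0 ltac:(lra) pL Lp cl cu.
rewrite /U -/S.
have hneg : inf S - p / c ^+ 2 <= - (1/27) * p ^+ 2 by lra.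
have pp : 0 < p ^+ 2 by apply: exprn_gt0.
rewrite ler0_norm; last lra.
apply/andP; split; lra.
Qed.
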